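(* Let $R$ be a ring with $2\notin U(R)$, and let $G$ be a non-trivial abelian group such that the group ring $RG$ is a GWNC ring. Then $G$ is a $2$-group and $2\in{\rm Nil}(R)$.
   Context: All rings are associative with identity. For a ring $S$, $U(S)$, ${\rm Nil}(S)$, ${\rm Id}(S)$ denote units, nilpotents, idempotents. $S$ is GWNC if every $a\in S\setminus U(S)$ can be written as $a=q+e$ or $a=q-e$ with $q\in{\rm Nil}(S)$, $e\in{\rm Id}(S)$. A group is a $p$-group if the order of each of its elements is a power of the prime $p$. *)

(* Defs.v *)
(* Group ring R[G] for an arbitrary (possibly infinite)
   abelian group G, written additively as a zmodType, built on the free
   R-module {freeg G / R} of finite formal R-combinations of elements of G
   (multinomials' freeg.v), with the convolution product. *)
From HB Require Import structures.
From mathcomp Require Import all_boot all_order all_algebra.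
From mathcomp.multinomials Require Import freeg.
Set Implicit Arguments. Unset Strict Implicit. Unset Printing Implicit Defensive.
Import Order.TTheory GRing.Theory Num.Theory.
Local Open Scope ring_scope.

Section RawRing.
Variables (S : Type) (zero one : S) (add mul : S -> S -> S) (opp : S -> S).

Definition raw_unit (a : S) := exists b, mul a b = one /\ mul b a = one.
Definition raw_pow (a : S) (n : nat) := iter n (mul a) one.
Definition raw_nil (a : S) := exists n, raw_pow a n = zero.
Definition raw_idem (e : S) := mul e e = e.

Definition raw_GWNC :=
  forall a, ~ raw_unit a ->
    exists q e, raw_nil q /\ raw_idem e /\ (a = add q e \/ a = add q (opp e)).
End RawRing.

Section RingNotions.
Variable S : nzRingType.
Definition is_unit (a : S) := exists b : S, a * b = 1 /\ b * a = 1.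
Definition is_nilpotent (a : S) := exists n : nat, a ^+ n = 0.
Definition is_idempotent (e : S) := e * e = e.
Definition GWNC := raw_GWNC 0 1 (@GRing.add S) (@GRing.mul S) (@GRing.opp S).
End RingNotions.

Section GroupRing.
Variables (R : nzRingType) (G : zmodType).
Definition grpring := {freeg G / R}.
Definition gr_one : grpring := << (1 : R) *g (0 : G) >>.
Definition gr_mul (a b : grpring) : grpring :=
  \sum_(g <- dom a) \sum_(h <- dom b) << (coeff g a * coeff h b) *g (g + h) >>.
Definition grpring_GWNC :=
  raw_GWNC (0 : grpring) gr_one (@GRing.add grpring) gr_mul (@GRing.opp grpring).
End GroupRing.

Definition is_pgroup (p : nat) (G : zmodType) :=
  forall g : G, exists k : nat, g *+ (p ^ k) = 0.

(* Main.v *)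
Require Import Defs.
From HB Require Import structures.
From mathcomp Require Import all_boot all_order all_algebra.
From mathcomp.multinomials Require Import freeg.
From mathcomp Require Import zify.
Set Implicit Arguments. Unset Strict Implicit. Unset Printing Implicit Defensive.
Import GRing.Theory.
Local Open Scope ring_scope.


Lemma bin_dvd2 m N i : (0 < i)%N -> (i < N)%N -> (2 ^ m %| 'C(2 ^ (m + N), i))%N.
Proof.
move=> i0 iN.
set n := (2 ^ (m + N))%N.
have iN2 : (i < 2 ^ N)%N by apply: (leq_trans iN); apply: ltnW; apply: ltn_expl.
have iln : (i <= n)%N.
  apply: ltnW; apply: (leq_trans iN2); rewrite /n leq_exp2l //; exact: leq_addl.
have c0 : (0 < 'C(n, i))%N by rewrite bin_gt0.
have hd : (2 ^ (m + N) %| i * 'C(n, i))%N.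
  case: i i0 iN iN2 iln c0 => // i _ iN iN2 iln c0.
  by rewrite -mul_bin_diag dvdn_mulr.
rewrite pfactor_dvdn // in hd; last by rewrite muln_gt0 i0 c0.
rewrite lognM // in hd.
have hl : (logn 2 i < N)%N.
  have : (2 ^ logn 2 i <= i)%N by apply: dvdn_leq => //; exact: pfactor_dvdnn.
  move=> h; rewrite -(ltn_exp2l _ _ (isT : (1 < 2)%N)); exact: leq_ltn_trans h iN2.
rewrite pfactor_dvdn //; lia.
Qed.

Section Gen.
Variable S : nzRingType.
Implicit Types x y q f : S.

Lemma binom_pow y N m : y ^+ N = 0 -> y *+ 2 ^ m = 0 -> (1 - y) ^+ (2 ^ (m + N)) = 1.
Proof.
move=> yN ym.
rewrite addrC exprD1n big_ord_recl /= expr0 bin0 mulr1n.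
rewrite big1 ?addr0 // => i _.
rewrite /bump /= add1n.
case: (ltnP i.+1 N) => hi.
  have := bin_dvd2 m (ltn0Sn i) hi; move/divnK <-.
  by rewrite mulnC mulrnA exprSr -mulrnAr mulNrn ym oppr0 mulr0 mul0rn.
rewrite exprNn.
have -> : y ^+ i.+1 = 0 by rewrite -(subnK hi) exprD yN mulr0.
by rewrite mulr0 mul0rn.
Qed.

Lemma nil_sum_comm (a b : S) m n : GRing.comm a b -> a ^+ m = 0 -> b ^+ n = 0 ->
  (a + b) ^+ (m + n) = 0.
Proof.
move=> cab am bn; rewrite exprDn_comm // big1 // => i _.
case: (ltnP i n) => hi.
  have : (m <= m + n - i)%N by lia.
  by move/subnK <-; rewrite exprD am !(mulr0, mul0r, mul0rn).
by rewrite -(subnK hi) exprD bn !(mulr0, mul0r, mul0rn).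
Qed.

Lemma sq_case1 q f n : GRing.comm q f -> q ^+ n = 0 -> f * f = f ->
  ((q + f) * (q + f) - (q + f)) ^+ n = 0.
Proof.
move=> cqf qn ff.
have -> : (q + f) * (q + f) - (q + f) = q * (q + f *+ 2 - 1).
  rewrite mulrDl !mulrDr ff -cqf mulrN1 [q + f]addrC opprD addrA.
  by rewrite [q * q + q * f + (q * f + f)]addrA addrK -[q * q + q * f + q * f]addrA.
rewrite exprMn_comm ?qn ?mul0r //.
apply: commrD; [apply: commrD => //; exact: commrMn|exact/commrN/commr1].
Qed.

Lemma sq_case2 q f n : GRing.comm q f -> q ^+ n = 0 -> f * f = f ->
  ((q - f) * (q - f) + (q - f)) ^+ n = 0.
Proof.
move=> cqf qn ff.
have -> : (q - f) * (q - f) + (q - f) = q * (q - f *+ 2 + 1).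
  rewrite mulrBl !mulrBr ff -cqf mulrDr mulrBr mulr1 mulrnAr mulr2n.
  rewrite opprB [f - _]addrC addrA. rewrite [X in X + q - f]addrA [X in X - f]addrAC addrK.
  by rewrite opprD addrA.
rewrite exprMn_comm ?qn ?mul0r //.
apply: commrD; [apply: commrD => //; exact/commrN/commrMn|exact/commr1].
Qed.

End Gen.


Section R1.
Variable R : nzRingType.

Lemma coprime_kill (y : R) a b : coprime a b -> (0 < a)%N -> y *+ a = 0 -> y *+ b = 0 -> y = 0.
Proof.
move=> cab a0 ya yb; case: (egcdnP b a0) => km kn E _.
move/eqnP: cab => g1; rewrite g1 in E.
have : y *+ (km * a) = y *+ (kn * b + 1) by rewrite E.
by rewrite mulrnDr mulr1n [(km * a)%N]mulnC [(kn * b)%N]mulnC !mulrnA ya yb !mul0rn add0r => <-.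
Qed.

Lemma odd3 k : exists s, (3 ^ k = s.*2.+1)%N.
Proof.
elim: k => [|k [s Hs]]; first by exists 0%N.
exists (3 * s + 1)%N; rewrite expnS Hs; lia.
Qed.

Lemma step1 (q f : R) n :
  ~ (exists b : R, 2%:R * b = 1 /\ b * 2%:R = 1) -> q ^+ n = 0 -> f * f = f ->
  (2%:R = q + f \/ 2%:R = q - f) ->
  exists e : R, exists k : nat, [/\ e * e = e, (forall r, e * r = r * e),
     e *+ 3 ^ k = 0, (1 - e) *+ 2 ^ k = 0 & 1 - e != 0].
Proof.
move=> nu qn ff [H|H].
- have fq : f * q = f.
    have -> : q = 2%:R - f by rewrite H addrK.
    by rewrite mulrBr ff mulr_natr mulr2n addrK.
  have f0 : f = 0.
    have : forall m, f * q ^+ m = f.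
      by elim=> [|m IH]; rewrite ?expr0 ?mulr1 // exprS mulrA fq.
    by move/(_ n); rewrite qn mulr0 => <-.
  exists 0, n; split; rewrite ?mulr0 ?mul0r ?mul0rn ?subr0 ?oner_neq0 //.
    by move=> r; rewrite mul0r mulr0.
  by rewrite (natrX R 2 n) H f0 addr0.
- have Eq : q = 2%:R + f by rewrite H; exact/esym/subrK.
  have fq : f * q = f *+ 3.
    by rewrite Eq mulrDr ff mulr_natr -mulrSr.
  have gq : (1 - f) * q = (1 - f) *+ 2.
    rewrite Eq mulrDr mulr_natr mulrBl ff mul1r subrr addr0 //.
  have f3 : forall m, f * q ^+ m = f *+ 3 ^ m.
    elim=> [|m IH]; first by rewrite expr0 mulr1 expn0 mulr1n.
    by rewrite exprSr mulrA IH mulrnAl fq -mulrnA mulnC -expnSr.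
  have g2 : forall m, (1 - f) * q ^+ m = (1 - f) *+ 2 ^ m.
    elim=> [|m IH]; first by rewrite expr0 mulr1 expn0 mulr1n.
    by rewrite exprSr mulrA IH mulrnAl gq -mulrnA mulnC -expnSr.
  have e3 : f *+ 3 ^ n = 0 by rewrite -f3 qn mulr0.
  have e2 : (1 - f) *+ 2 ^ n = 0 by rewrite -g2 qn mulr0.
  have cop : coprime (3 ^ n) (2 ^ n) by apply: coprimeXl; apply: coprimeXr.
  have kill : forall y : R, y *+ 3 ^ n = 0 -> y *+ 2 ^ n = 0 -> y = 0.
    by move=> y; apply: coprime_kill cop _; rewrite expn_gt0.
  exists f, n; split => //.
  + move=> r.
    have h1 : f * r * (1 - f) = 0.
      apply: kill; first by rewrite -!mulrnAl e3 !mul0r.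
      by rewrite -mulrnAr e2 mulr0.
    have h2 : (1 - f) * r * f = 0.
      apply: kill; first by rewrite -mulrnAr e3 mulr0.
      by rewrite -!mulrnAl e2 !mul0r.
    have h1' : f * r = f * r * f.
      by apply/eqP; rewrite -subr_eq0 -[X in X - _]mulr1 -mulrBr h1.
    have h2' : r * f = f * r * f.
      by apply/eqP; rewrite -subr_eq0 -[X in X - _]mul1r -mulrA -mulrBl mulrA h2.
    by rewrite h1' h2'.
  + apply/eqP => f1; apply: nu.
    have f1' : f = 1 by apply/eqP; rewrite -subr_eq0 -opprB f1 oppr0.
    case: (odd3 n) => s Hs.
    rewrite f1' Hs in e3.
    have hs : (s.*2)%:R = - 1 :> R.
      by apply/eqP; rewrite -addr_eq0 -mulrSr; apply/eqP.
    exists (- s%:R); split.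
    * by rewrite mulrN -natrM mul2n hs opprK.
    * by rewrite mulNr -natrM muln2 hs opprK.
Qed.
End R1.


HB.instance Definition _ (R : nzRingType) (G : zmodType) (M : lmodType R) (f : G -> M) :=
  GRing.isAdditive.Build {freeg G / R} M (fglift f) (lift_is_additive f).

Section GR.
Variables (R : nzRingType) (G : zmodType).
Local Notation FG := {freeg G / R}.

Lemma scaleU (r s : R) (x : G) : r *: << s *g x >> = << r * s *g x >> :> FG.
Proof. by apply/eqP/freeg_eqP => y; rewrite coeffZ !coeffU mulrA. Qed.

Lemma fglift_dom (M : lmodType R) (f : G -> M) (a : FG) :
  fglift f a = \sum_(g <- dom a) coeff g a *: f g.
Proof.
rewrite -{1}[a]freeg_sumE raddf_sum; apply: eq_bigr => g _ /=. exact: liftU.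
Qed.

Definition sh (g : G) (b : FG) : FG := fglift (fun h => << (1:R) *g (g + h) >>) b.

Lemma gr_mulE (a b : FG) : gr_mul a b = fglift (fun g => sh g b) a.
Proof.
rewrite fglift_dom /gr_mul; apply: eq_bigr => g _.
rewrite /sh fglift_dom scaler_sumr; apply: eq_bigr => h _.
by rewrite scaleU scaleU mulr1.
Qed.

Lemma gr_mulDl (a b c : FG) : gr_mul (a + b) c = gr_mul a c + gr_mul b c.
Proof. by rewrite !gr_mulE raddfD. Qed.
Lemma sh_add g : additive (sh g).
Proof. exact: lift_is_additive. Qed.

Lemma gr_mulDr (a b c : FG) : gr_mul a (b + c) = gr_mul a b + gr_mul a c.
Proof.
rewrite !gr_mulE !fglift_dom -big_split /=; apply: eq_bigr => g _.
by rewrite -scalerDr /sh raddfD.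
Qed.

Lemma gr_mul0l (a : FG) : gr_mul 0 a = 0.
Proof. by rewrite gr_mulE raddf0. Qed.
Lemma gr_mul0r (a : FG) : gr_mul a 0 = 0.
Proof.
have h := gr_mulDr a 0 0; rewrite addr0 in h.
by apply: (addrI (gr_mul a 0)); rewrite addr0 -h.
Qed.

Lemma gr_mulU (r s : R) (g h : G) :
  gr_mul << r *g g >> << s *g h >> = << r * s *g (g + h) >>.
Proof. by rewrite gr_mulE liftU /sh liftU !scaleU mulr1. Qed.

Lemma fg_ind (P : FG -> Prop) : P 0 -> (forall a b, P a -> P b -> P (a + b)) ->
  (forall r g, P << r *g g >>) -> forall a, P a.
Proof.
move=> P0 PD PU; elim/freeg_ind_dom0 => // k x D _ _ PDD; exact: PD.
Qed.

Lemma gr_mulA : associative (@gr_mul R G).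
Proof.
move=> a b c; elim/fg_ind: a.
- by rewrite !gr_mul0l.
- by move=> a1 a2 H1 H2; rewrite !gr_mulDl H1 H2.
move=> r g; elim/fg_ind: b.
- by rewrite gr_mul0r gr_mul0l gr_mul0r.
- by move=> a1 a2 H1 H2; rewrite !(gr_mulDl, gr_mulDr) H1 H2.
move=> s h; elim/fg_ind: c.
- by rewrite !gr_mul0r.
- by move=> a1 a2 H1 H2; rewrite !gr_mulDr H1 H2.
by move=> t k; rewrite !gr_mulU mulrA addrA.
Qed.

Lemma gr_mul1l : left_id (gr_one R G) (@gr_mul R G).
Proof.
elim/fg_ind => [|a b H1 H2|r g]; first by rewrite gr_mul0r.
  by rewrite gr_mulDr H1 H2.
by rewrite gr_mulU mul1r add0r.
Qed.

Lemma gr_mul1r : right_id (gr_one R G) (@gr_mul R G).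
Proof.
elim/fg_ind => [|a b H1 H2|r g]; first by rewrite gr_mul0l.
  by rewrite gr_mulDl H1 H2.
by rewrite gr_mulU mulr1 addr0.
Qed.

Lemma gr_one_neq0 : gr_one R G != 0.
Proof. by rewrite /gr_one freegU_eq0 oner_neq0. Qed.

End GR.

HB.instance Definition _ (R : nzRingType) (G : zmodType) :=
  GRing.Zmodule.on (grpring R G).
HB.instance Definition _ (R : nzRingType) (G : zmodType) :=
  GRing.Zmodule_isNzRing.Build (grpring R G) (@gr_mulA R G) (@gr_mul1l R G)
    (@gr_mul1r R G) (@gr_mulDl R G) (@gr_mulDr R G) (@gr_one_neq0 R G).


Section GRL.
Variables (R : nzRingType) (G : zmodType).
Local Notation A := (grpring R G).

Definition iota (r : R) : A := << r *g 0 >>.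
Definition dl (g : G) : A := << (1 : R) *g g >>.

Lemma mulU (r s : R) (g h : G) :
  (<< r *g g >> : A) * << s *g h >> = << r * s *g (g + h) >>.
Proof. exact: gr_mulU. Qed.

Lemma iotaM r s : iota (r * s) = iota r * iota s.
Proof. by rewrite mulU addr0. Qed.
Lemma iotaB r s : iota (r - s) = iota r - iota s.
Proof. by rewrite /iota freegUB. Qed.
Lemma iota1 : iota 1 = 1.
Proof. by []. Qed.
Lemma iota0 : iota 0 = 0.
Proof. by rewrite /iota freegU0. Qed.
Lemma iotaMn r n : iota (r *+ n) = iota r *+ n.
Proof. by rewrite /iota freeg_muln. Qed.
Lemma iota_dl r g : iota r * dl g = << r *g g >>.
Proof. by rewrite mulU mulr1 add0r. Qed.
Lemma dlD g h : dl g * dl h = dl (g + h).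
Proof. by rewrite mulU mulr1. Qed.
Lemma dl0 : dl 0 = 1.
Proof. by []. Qed.
Lemma dlX g m : dl g ^+ m = dl (g *+ m).
Proof.
elim: m => [|m IH]; first by rewrite expr0 mulr0n dl0.
by rewrite exprS IH dlD mulrS.
Qed.

Lemma comm_dl g (a : A) : GRing.comm (dl g) a.
Proof.
rewrite /GRing.comm; elim/fg_ind: a => [|a b H1 H2|r h].
- by rewrite mulr0 mul0r.
- by rewrite mulrDr mulrDl H1 H2.
by rewrite !mulU mul1r mulr1 addrC.
Qed.

Lemma comm_iota r (a : A) : (forall x, r * x = x * r) -> GRing.comm (iota r) a.
Proof.
move=> cr; rewrite /GRing.comm; elim/fg_ind: a => [|a b H1 H2|s h].
- by rewrite mulr0 mul0r.
- by rewrite mulrDr mulrDl H1 H2.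
by rewrite !mulU cr addr0 add0r.
Qed.

Definition eps (a : A) : R := fglift (fun _ => (1 : R^o)) a.

Lemma epsU r g : eps << r *g g >> = r.
Proof. by rewrite /eps liftU /GRing.scale /= mulr1. Qed.
Lemma eps0 : eps 0 = 0.
Proof. by rewrite /eps raddf0. Qed.
Lemma epsD a b : eps (a + b) = eps a + eps b.
Proof. by rewrite /eps raddfD. Qed.
Lemma epsB a b : eps (a - b) = eps a - eps b.
Proof. by rewrite /eps raddfB. Qed.
Lemma epsM a b : eps (a * b) = eps a * eps b.
Proof.
elim/fg_ind: a => [|a1 a2 H1 H2|r g].
- by rewrite mul0r eps0 mul0r.
- by rewrite mulrDl !epsD H1 H2 mulrDl.
elim/fg_ind: b => [|b1 b2 H1 H2|s h].
- by rewrite mulr0 eps0 mulr0.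
- by rewrite mulrDr !epsD H1 H2 mulrDr.
by rewrite mulU !epsU.
Qed.
Lemma eps1 : eps 1 = 1.
Proof. exact: epsU. Qed.
Lemma epsX a n : eps (a ^+ n) = eps a ^+ n.
Proof.
elim: n => [|n IH]; first by rewrite !expr0 eps1.
by rewrite !exprS epsM IH.
Qed.
Lemma eps_nat n : eps n%:R = n%:R.
Proof. by rewrite /eps raddfMn /= -/(eps 1) eps1. Qed.
Lemma eps_dl g : eps (dl g) = 1.
Proof. exact: epsU. Qed.
Lemma eps_iota r : eps (iota r) = r.
Proof. exact: epsU. Qed.

Lemma raw_powE (q : A) n : raw_pow (gr_one R G) (@gr_mul R G) q n = q ^+ n.
Proof. by elim: n => [|n IH] //=; rewrite IH exprS. Qed.

Lemma gwnc_use : grpring_GWNC R G -> forall a : A,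
  ~ (exists b, a * b = 1 /\ b * a = 1) ->
  exists q f : A, (exists n, q ^+ n = 0) /\ f * f = f /\ (a = q + f \/ a = q - f).
Proof.
move=> H a nu; have [q [f [[n qn] [ff E]]]] := H a nu.
exists q, f; split; first by exists n; rewrite -raw_powE.
by split.
Qed.

End GRL.

Section Alg.
Variable S : nzRingType.

Lemma gw_sq (x : S) : (forall a, GRing.comm x a) ->
  (exists q f : S, (exists n, q ^+ n = 0) /\ f * f = f /\ (x = q + f \/ x = q - f)) ->
  (exists N, (x * x - x) ^+ N = 0) \/ (exists N, (x * x + x) ^+ N = 0).
Proof.
move=> cx [q [f [[n qn] [ff [Ex|Ex]]]]].
- left; exists n.
  have cqf : GRing.comm q f.
    have -> : f = x - q by rewrite Ex [q + f]addrC addrK.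
    apply: commrB; [exact: commr_sym (cx q)|exact: commr_refl].
  by rewrite Ex; apply: sq_case1.
- right; exists n.
  have cqf : GRing.comm q f.
    have -> : f = q - x by rewrite Ex opprB addrC subrK.
    apply: commrB; [exact: commr_refl|exact: commr_sym (cx q)].
  by rewrite Ex; apply: sq_case2.
Qed.

Lemma step2_alg (E P d d' : S) k :
  P + E = 1 -> E * E = E -> P * P = P -> E * P = 0 -> P * E = 0 ->
  (forall a, GRing.comm E a) -> (forall a, GRing.comm P a) ->
  (forall a, GRing.comm d a) -> d * d' = 1 -> P *+ 2 ^ k = 0 ->
  let x := P * (1 - d) in
  (exists N, (x * x - x) ^+ N = 0) \/ (exists N, (x * x + x) ^+ N = 0) ->
  exists K, P * d ^+ (2 ^ K) = P.
Proof.
move=> hPE hEE hPP hEP hPE' cE cP cd hdd' hP2 x H.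
have cx : forall a, GRing.comm a x.
  move=> a; apply: commrM; first exact: commr_sym (cP a).
  apply: commrB; [exact: commr1|exact: commr_sym (cd a)].
have x2 : x *+ 2 ^ k = 0 by rewrite /x -mulrnAl hP2 mul0r.
have [N hN] : exists N, (x * x - x) ^+ N = 0.
  case: H => [//|[N hN]].
  exists (N + k.+1)%N.
  have -> : x * x - x = (x * x + x) + (- (x *+ 2)).
    by rewrite mulr2n opprD addrA addrK.
  apply: nil_sum_comm => //.
    apply: commrN; apply: commrMn; apply: commr_sym; apply: commrD.
      apply: commrM; exact: cx.
    exact: commr_refl.
  rewrite exprNn exprMn_n [x ^+ _.+1]exprSr -mulrnAr expnSr mulrnA x2 mul0rn.
  by rewrite mulr0 mulr0.
have xE : x * E = 0.
  by rewrite /x -mulrA -(cE (1 - d)) mulrA hPE' mul0r.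
have xP : x * P = x.
  by rewrite /x -mulrA -(cP (1 - d)) mulrA hPP.
have hx1 : x * x - x = - (x * d).
  rewrite -{3}[x]mulr1 -mulrBr.
  have -> : x - 1 = - (E + P * d).
    rewrite /x mulrBr mulr1 -hPE opprD addrA [P - P * d - P]addrAC subrr add0r.
    by rewrite opprD addrC.
  by rewrite mulrN mulrDr xE add0r mulrA xP.
have xN : x ^+ N = 0.
  have -> : x = (x * x - x) * (- d').
    by rewrite hx1 mulrNN -mulrA hdd' mulr1.
  rewrite exprMn_comm ?hN ?mul0r //.
  apply: commrN; apply: commr_sym; apply: commrB; last exact: cx.
  apply: commrM; exact: cx.
have hb := binom_pow xN x2.
have h1x : 1 - x = E + P * d.
  by rewrite /x mulrBr mulr1 -hPE opprB [P + E]addrC -addrA [P + (_ - _)]addrC subrK.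
have hpow : forall m, (E + P * d) ^+ m = E + P * d ^+ m.
  elim=> [|m IH]; first by rewrite !expr0 mulr1 addrC.
  rewrite exprSr IH mulrDr !mulrDl hEE.
  have h1 : P * d ^+ m * E = 0 by rewrite -mulrA -(cE (d ^+ m)) mulrA hPE' mul0r.
  have h2 : E * (P * d) = 0 by rewrite mulrA hEP mul0r.
  have h3 : P * d ^+ m * (P * d) = P * d ^+ m.+1.
    by rewrite -mulrA (mulrA (d ^+ m)) -(cP (d ^+ m)) !mulrA hPP -mulrA -exprSr.
  by rewrite h1 h2 h3 addr0 add0r.
exists (k + N)%N.
move: hb; rewrite h1x hpow -hPE addrC => /addIr.
by [].
Qed.

Lemma step3_alg (E d : S) s :
  E * E = E -> (forall a, GRing.comm E a) -> (forall a, GRing.comm d a) ->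
  d * d = 1 -> E = - (E *+ s.*2) ->
  let x := E * d in
  (exists N, (x * x - x) ^+ N = 0) \/ (exists N, (x * x + x) ^+ N = 0) ->
  E * d = E \/ E * d = - E.
Proof.
move=> hEE cE cd hdd hs x H.
have xx : x * x = E.
  by rewrite /x -mulrA (mulrA d) -(cE d) -mulrA hdd mulr1 hEE.
have half : forall z, z = E * z -> z *+ 2 = 0 -> z = 0.
  move=> z hz z2; rewrite hz {1}hs mulNr mulrnAl -hz -mul2n mulrnA z2 mul0rn.
  by rewrite oppr0.
have down : forall n z, z = E * z -> z *+ 2 ^ n = 0 -> z = 0.
  elim=> [|n IH] z hz zn; first by rewrite expn0 mulr1n in zn.
  apply: half => //; apply: IH; first by rewrite mulrnAr -hz.
  by rewrite -mulrnA -expnS.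
have key : forall y, y = E * y -> y * y = y *+ 2 -> forall N, y ^+ N = 0 -> y = 0.
  move=> y hy yy N yN.
  have hp : forall m, y ^+ m.+1 = y *+ 2 ^ m.
    elim=> [|m IH]; first by rewrite expr1 expn0 mulr1n.
    by rewrite exprSr IH mulrnAl yy -mulrnA -expnS.
  apply: (down N) => //; by rewrite -hp exprSr yN mul0r.
have EEd : E * (E * d) = E * d by rewrite mulrA hEE.
have EdE : E * d * E = E * d by rewrite -mulrA -(cE d) mulrA hEE.
case: H => [[N hN]|[N hN]]; rewrite xx in hN.
- left; apply/eqP; rewrite eq_sym -subr_eq0; apply/eqP.
  apply: (key _ _ _ N) => //.
    by rewrite mulrBr hEE EEd.
  rewrite mulrBl !mulrBr hEE EEd EdE xx.
  by rewrite opprB mulr2n.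
- right; apply/eqP; rewrite -addr_eq0 addrC; apply/eqP.
  apply: (key _ _ _ N) => //.
    by rewrite mulrDr hEE EEd.
  rewrite mulrDl !mulrDr hEE EEd EdE xx.
  by rewrite [E * d + E]addrC mulr2n.
Qed.

End Alg.

Lemma ord2 (G : zmodType) K (g : G) : g != 0 -> g *+ 2 ^ K = 0 ->
  exists h : G, h != 0 /\ h *+ 2 = 0.
Proof.
elim: K g => [|K IH] g gn gK; first by rewrite expn0 mulr1n in gK; rewrite gK eqxx in gn.
case: (eqVneq (g *+ 2) 0) => [g2|g2]; first by exists g.
apply: (IH (g *+ 2)) => //; by rewrite -mulrnA -expnS.
Qed.

Lemma iotaD (R : nzRingType) (G : zmodType) (r s : R) :
  iota G (r + s) = iota G r + iota G s.
Proof. by rewrite /iota freegUD. Qed.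

Lemma comm_cent (S : nzRingType) (u v : S) :
  (forall a, GRing.comm u a) -> (forall a, GRing.comm v a) -> forall a, GRing.comm (u * v) a.
Proof.
move=> cu cv a; apply: commr_sym; apply: commrM; exact: commr_sym.
Qed.

Theorem theorem3p6 (R : nzRingType) (G : zmodType) :
  ~ is_unit (2%:R : R) ->
  (exists g : G, g != 0) ->
  grpring_GWNC R G ->
  is_pgroup 2 G /\ is_nilpotent (2%:R : R).
Proof.
move=> nu [g0 g0n] HG.
have nu2 : ~ (exists b : grpring R G, 2%:R * b = 1 /\ b * 2%:R = 1).
  case=> b [h1 h2]; apply: nu; exists (eps b); split.
    by have := congr1 (@eps R G) h1; rewrite epsM eps_nat eps1.
  by have := congr1 (@eps R G) h2; rewrite epsM eps_nat eps1.
have [q [f [[n qn] [ff E2]]]] := gwnc_use HG nu2.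
have [e [k [ee ce e3 e2 e1]]] : exists e : R, exists k : nat, [/\ e * e = e,
     (forall r, e * r = r * e), e *+ 3 ^ k = 0, (1 - e) *+ 2 ^ k = 0 & 1 - e != 0].
  apply: (@step1 R (eps q) (eps f) n nu).
  - by rewrite -epsX qn eps0.
  - by rewrite -epsM ff.
  - case: E2 => H2; [left|right]; rewrite -(eps_nat R G 2) H2 ?epsB ?epsD; reflexivity.
have cone : forall r, (1 - e) * r = r * (1 - e).
  by move=> r; rewrite mulrBl mulrBr mul1r mulr1 ce.
have hEE : iota G e * iota G e = iota G e by rewrite -iotaM ee.
have hcE : forall a, GRing.comm (iota G e) a by move=> a; apply: comm_iota.
have pg : is_pgroup 2 G.
  move=> g.
  pose E := iota G e; pose P := iota G (1 - e); pose d := dl R g; pose d' := dl R (- g).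
  have hPE : P + E = 1 by rewrite /P iotaB iota1 subrK.
  have hPP : P * P = P.
    by rewrite /P -iotaM mulrBl mul1r mulrBr mulr1 ee subrr subr0.
  have hEP : E * P = 0 by rewrite /E /P -iotaM mulrBr mulr1 ee subrr iota0.
  have hPE' : P * E = 0 by rewrite /E /P -iotaM mulrBl mul1r ee subrr iota0.
  have cP : forall a, GRing.comm P a by move=> a; apply: comm_iota.
  have cd : forall a, GRing.comm d a by move=> a; apply: comm_dl.
  have cd' : forall a, GRing.comm d' a by move=> a; apply: comm_dl.
  have hdd' : d * d' = 1 by rewrite /d /d' dlD subrr dl0.
  have hP2 : P *+ 2 ^ k = 0 by rewrite /P -iotaMn e2 iota0.
  pose x := P * (1 - d).
  have cx : forall a, GRing.comm x a.
    apply: comm_cent => // a; apply: commr_sym; apply: commrB.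
      exact: commr1.
    exact: commr_sym.
  have nux : ~ (exists b, x * b = 1 /\ b * x = 1).
    case=> b [h1 _]; have := congr1 (@eps R G) h1.
    rewrite /x !epsM epsB /d eps_dl eps1 subrr mulr0 mul0r => /eqP.
    by rewrite eq_sym oner_eq0.
  have H := gw_sq cx (gwnc_use HG nux).
  have [K hK] := step2_alg hPE hEE hPP hEP hPE' hcE cP cd hdd' hP2 H.
  exists K.
  case: (eqVneq (g *+ 2 ^ K) 0) => // hne.
  move: hK; rewrite /d dlX /P iota_dl => /(congr1 (coeff (g *+ 2 ^ K))).
  rewrite !coeffU eqxx eq_sym (negbTE hne) mulr1 mulr0 => /eqP.
  by rewrite (negbTE e1).
have e0 : e = 0.
  apply/eqP; apply/negP => en.
  have [h [hn h2]] : exists h : G, h != 0 /\ h *+ 2 = 0.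
    by have [K hK] := pg g0; exact: ord2 g0n hK.
  pose E := iota G e; pose d := dl R h.
  have cd : forall a, GRing.comm d a by move=> a; apply: comm_dl.
  have hdd : d * d = 1 by rewrite /d dlD -mulr2n h2 dl0.
  have [s hs] := odd3 k.
  have hsE : E = - (E *+ s.*2).
    apply/eqP; rewrite -addr_eq0; apply/eqP.
    by rewrite /E addrC -iotaMn -iotaD -mulrSr -hs e3 iota0.
  pose x := E * d.
  have cx : forall a, GRing.comm x a by apply: comm_cent.
  have nux : ~ (exists b, x * b = 1 /\ b * x = 1).
    case=> b [h1 _]; have := congr1 (@eps R G) h1.
    rewrite !epsM eps_iota eps_dl mulr1 eps1 => heb.
    move/negP: e1; apply; apply/eqP.
    have -> : 1 - e = (1 - e) * (e * eps b) by rewrite heb mulr1.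
    by rewrite mulrA mulrBl mul1r ee subrr mul0r.
  have H := gw_sq cx (gwnc_use HG nux).
  have [h1|h1] := step3_alg hEE hcE cd hdd hsE H.
  - move: h1; rewrite /E /d iota_dl => /(congr1 (coeff h)).
    rewrite !coeffU eqxx eq_sym (negbTE hn) mulr1 mulr0 => /eqP.
    exact: en.
  - move: h1; rewrite /E /d iota_dl freegUN => /(congr1 (coeff h)).
    rewrite !coeffU eqxx eq_sym (negbTE hn) mulr1 mulr0 => /eqP.
    exact: en.
split => //; exists k.
by move: e2; rewrite e0 subr0 -natrX.
Qed.
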